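(* Let $n \ge 3$ be an integer and let $I$ be a degree-based topological index with coefficients $c_{12},c_{13},c_{22},c_{23},c_{33}$. Define $c'_{12} = c_{12}-4c_{22}+3c_{23}$, $c'_{13} = c_{13}-3c_{22}+2c_{23}$, $c'_{33} = c_{22}-2c_{23}+c_{33}$. If $\max\{0,-c'_{33}\}<\min\{c'_{12},c'_{13}\}$, then the cycle $C_n$ on $n$ vertices is, up to isomorphism, the only graph in $\mathcal{G}_3(n,n)$ that minimizes $I$.
   Context: For integers $n,m$, $\mathcal{G}_3(n,m)$ denotes the set of simple connected undirected graphs (chemical graphs) with $n$ vertices, $m$ edges and maximum degree at most $3$; in particular $\mathcal{G}_3(n,n)$ is the set of connected unicyclic graphs of order $n$ with maximum degree at most $3$. For a graph $G$ and $1\le i\le j$, an $ij$-edge is an edge whose endpoints have degrees $i$ and $j$, and $m_{ij}$ denotes the number of $ij$-edges of $G$. A degree-based topological index $I$ is a function on chemical graphs of order $n\ge 3$ of the form $I(G)=c_{12}m_{12}+c_{13}m_{13}+c_{22}m_{22}+c_{23}m_{23}+c_{33}m_{33}$, where the $c_{ij}$ are fixed real numbers. *)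

(* Defs.v *)
From mathcomp Require Import all_boot all_order all_algebra.
Set Implicit Arguments. Unset Strict Implicit. Unset Printing Implicit Defensive.
Import Order.TTheory GRing.Theory Num.Theory.

Definition simple_graph (n : nat) (e : rel 'I_n) : Prop :=
  (forall x y, e x y = e y x) /\ (forall x, ~~ e x x).

Definition deg (n : nat) (e : rel 'I_n) (v : 'I_n) : nat := #|[set w | e v w]|.

Definition edge_set (n : nat) (e : rel 'I_n) : {set 'I_n * 'I_n} :=
  [set p | e p.1 p.2 && (p.1 < p.2)%N].

Definition num_edges (n : nat) (e : rel 'I_n) : nat := #|edge_set e|.

Definition connected_graph (n : nat) (e : rel 'I_n) : Prop :=
  forall x y, connect e x y.

Definition in_G3 (n m : nat) (e : rel 'I_n) : Prop :=
  simple_graph e /\ connected_graph e /\ num_edges e = m /\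
  (forall v, (deg e v <= 3)%N).

Definition m_ij (n : nat) (e : rel 'I_n) (i j : nat) : nat :=
  #|[set p in edge_set e |
      ((deg e p.1 == i) && (deg e p.2 == j)) ||
      ((deg e p.1 == j) && (deg e p.2 == i))]|.

Definition topo_index (R : pzRingType) (c12 c13 c22 c23 c33 : R)
  (n : nat) (e : rel 'I_n) : R :=
  c12 * (m_ij e 1 2)%:R + c13 * (m_ij e 1 3)%:R + c22 * (m_ij e 2 2)%:R
  + c23 * (m_ij e 2 3)%:R + c33 * (m_ij e 3 3)%:R.

Definition cycle_graph (n : nat) : rel 'I_n :=
  fun x y => (val y == (val x).+1 %% n) || (val x == (val y).+1 %% n).

Definition graph_iso (n : nat) (e1 e2 : rel 'I_n) : Prop :=
  exists f : 'I_n -> 'I_n, bijective f /\ forall x y, e1 x y = e2 (f x) (f y).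

(* Main.v *)
Require Import Defs.
From mathcomp Require Import all_boot all_order all_algebra.
From mathcomp Require Import zify.
Set Implicit Arguments. Unset Strict Implicit. Unset Printing Implicit Defensive.
Import Order.TTheory GRing.Theory Num.Theory.

Definition bij (d1 d2 i j : nat) : bool :=
  ((d1 == i) && (d2 == j)) || ((d1 == j) && (d2 == i)).
Definition g6 (d : nat) : nat :=
  match d with 1 => 6 | 2 => 3 | 3 => 2 | _ => 0 end%N.

Lemma cls d1 d2 : (0 < d1 <= 3)%N -> (0 < d2 <= 3)%N ->
  ~~ ((d1 == 1%N) && (d2 == 1%N)) ->
  [/\ (bij d1 d2 1 2 + bij d1 d2 1 3 + bij d1 d2 2 2 + bij d1 d2 2 3
        + bij d1 d2 3 3 = 1)%N,
      (g6 d1 + g6 d2 = 9 * bij d1 d2 1 2 + 8 * bij d1 d2 1 3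
        + 6 * bij d1 d2 2 2 + 5 * bij d1 d2 2 3 + 4 * bij d1 d2 3 3)%N,
      ((d1 == 3%N) + (d2 == 3%N) = bij d1 d2 1 3 + bij d1 d2 2 3
        + 2 * bij d1 d2 3 3)%N &
      ((d1 == 1%N) + (d2 == 1%N) = bij d1 d2 1 2 + bij d1 d2 1 3)%N].
Proof.
by case: d1 => [|[|[|[|]]]] //; case: d2 => [|[|[|[|]]]].
Qed.

Section G.
Variable n : nat.
Variable e : rel 'I_n.
Hypothesis esymm : forall x y, e x y = e y x.
Hypothesis eirr : forall x, ~~ e x x.
Hypothesis econn : forall x y, connect e x y.

Lemma closed_all (S : {set 'I_n}) x : x \in S ->
  (forall u v, u \in S -> e u v -> v \in S) -> forall y, y \in S.
Proof.
move=> xS cl y; have /connectP [p pth ->] := econn x y.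
elim: p x xS pth => [|z p IH] x xS //= /andP [exz pz].
exact: IH (cl _ _ xS exz) pz.
Qed.

Lemma closed_card (S : {set 'I_n}) x : x \in S ->
  (forall u v, u \in S -> e u v -> v \in S) -> #|S| = n.
Proof.
move=> xS cl; have -> : S = setT by apply/setP => y; rewrite inE (closed_all xS cl).
by rewrite cardsT card_ord.
Qed.

Lemma deg_pos v : (2 <= n)%N -> (0 < deg e v)%N.
Proof.
move=> n2; rewrite lt0n; apply/negP => /eqP d0.
have cl : forall u w, u \in [set v] -> e u w -> w \in [set v].
  move=> u w; rewrite inE => /eqP -> evw.
  have : (0 < #|[set w | e v w]|)%N by apply/card_gt0P; exists w; rewrite inE.
  by rewrite -/(deg e v) d0.
have := closed_card (set11 v) cl; rewrite cards1; lia.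
Qed.

Lemma deg1_nb v a w : deg e v = 1%N -> e v a -> e v w -> w = a.
Proof.
move=> d1 ea ew.
have : (#|[set w | e v w]| <= 1)%N by rewrite -/(deg e v) d1.
move/card_le1P => H.
have ain : a \in [set w | e v w] by rewrite inE.
have := H a ain w; rewrite inE ew /= => /esym. by move/eqP.
Qed.

Lemma deg2_nb v a b w : deg e v = 2%N -> e v a -> e v b -> a != b -> e v w ->
  w = a \/ w = b.
Proof.
move=> d2 ea eb ab ew.
case: (eqVneq w a) => [->|wa]; first by left.
case: (eqVneq w b) => [->|wb]; first by right.
have : (2 < #|[set w | e v w]|)%N.
  apply/card_gt2P; exists a, b, w; rewrite !inE ea eb ew; split => //.
  by split => //; rewrite eq_sym.
by rewrite -/(deg e v) d2.
Qed.

Lemma no11 u v : (2 < n)%N -> e u v -> deg e u = 1%N -> deg e v = 1%N -> False.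
Proof.
move=> n3 euv du dv.
have cl : forall x w, x \in [set u; v] -> e x w -> w \in [set u; v].
  move=> x w; rewrite !inE => /orP [] /eqP -> exw.
    by rewrite (deg1_nb du euv exw) eqxx orbT.
  by rewrite esymm in euv; rewrite (deg1_nb dv euv exw) eqxx.
have := closed_card (setU11 u [set v]) cl.
have := cards2 u v. case: (u != v) => /= ->; lia.
Qed.

Lemma edge_sum (F : 'I_n * 'I_n -> nat) :
  (\sum_(p in edge_set e) F p =
   \sum_v \sum_w (if e v w && (v < w)%N then F (v, w) else 0))%N.
Proof.
rewrite big_mkcond /= pair_bigA /=; apply: eq_bigr => [[v w]] _.
by rewrite inE.
Qed.

Lemma handshake (g : 'I_n -> nat) :
  (\sum_(p in edge_set e) (g p.1 + g p.2) = \sum_v deg e v * g v)%N.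
Proof.
rewrite edge_sum.
have -> : (\sum_v deg e v * g v =
   \sum_v \sum_w (if e v w then g v else 0))%N.
  apply: eq_bigr => v _; rewrite -big_mkcond /= /deg -sum_nat_const.
  by apply: eq_bigl => w; rewrite inE.
have -> : (\sum_v \sum_w (if e v w then g v else 0) =
   \sum_v \sum_w (if e v w && (v < w)%N then g v else 0) +
   \sum_v \sum_w (if e w v && (v < w)%N then g w else 0))%N.
  rewrite [X in (_ = _ + X)%N]exchange_big /= -big_split /=; apply: eq_bigr => v _.
  rewrite -big_split /=; apply: eq_bigr => w _.
  case: (ltngtP v w) => [lt|gt|eq].
  - by rewrite andbT andbF addn0.
  - by rewrite andbT andbF add0n.
  - have -> : v = w by apply: val_inj.
    by rewrite (negbTE (eirr w)).
rewrite -big_split /=; apply: eq_bigr => v _.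
rewrite -big_split /=; apply: eq_bigr => w _.
by rewrite (esymm w v); case: (e v w && (v < w)%N).
Qed.

Lemma m_sum i j : m_ij e i j =
  (\sum_(p in edge_set e) (bij (deg e p.1) (deg e p.2) i j : nat))%N.
Proof.
rewrite /m_ij -sum1_card big_mkcond /= [RHS]big_mkcond /=.
apply: eq_bigr => p _; rewrite !inE /bij.
by case: (e p.1 p.2 && _); case: (_ || _).
Qed.

Fixpoint reach (S : {set 'I_n}) (k : nat) (v : 'I_n) : bool :=
  (v \in S) || (if k is k'.+1 then [exists w, e v w && reach S k' w] else false).

Lemma reach_ex (S : {set 'I_n}) (s : 'I_n) : s \in S -> forall v, exists k, reach S k v.
Proof.
move=> sS v; have /connectP [p pth lst] := econn v s.
elim: p v pth lst => [|z p IH] v /=.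
  by move=> _ E; exists 0%N; rewrite /= -E sS.
move=> /andP [evz pz] lst; have [k hk] := IH z pz lst; exists k.+1.
rewrite /=; apply/orP; right; apply/existsP; exists z; by rewrite evz hk.
Qed.

Lemma inside_le (S : {set 'I_n}) : num_edges e = n ->
  (#|[set p in edge_set e | (p.1 \in S) && (p.2 \in S)]| <= #|S|)%N.
Proof.
move=> ne.
case: (set_0Vmem S) => [->|[s sS]].
  rewrite cards0 leqn0 cards_eq0; apply/eqP/setP => p; rewrite !inE.
  by rewrite !andbF.
pose d v := ex_minn (reach_ex sS v).
have dP v : reach S (d v) v by rewrite /d; case: ex_minnP.
have dmin v k : reach S k v -> (d v <= k)%N.
  by rewrite /d; case: ex_minnP => m _ H; apply: H.
pose par v := odflt v [pick w | e v w && reach S (d v).-1 w].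
have parP v : v \notin S -> e v (par v) && (d (par v) < d v)%N.
  move=> vS; have := dP v; case Edv: (d v) => [|k] /=.
    by rewrite (negbTE vS).
  rewrite (negbTE vS) /= => /existsP [w hw].
  rewrite /par Edv /=.
  case: pickP => [w' /andP [ew' rw'] | /(_ w)]; last by rewrite hw.
  by rewrite ew' /= ltnS; apply: dmin.
pose B : {set 'I_n * 'I_n} := [set p | (p.1 \in S) && (p.2 \in S)].
pose f (v : 'I_n) := if (v < par v)%N then (v, par v) else (par v, v).
have fE v : v \notin S -> f v \in edge_set e :\: B.
  move=> vS; have /andP [ep _] := parP v vS.
  rewrite /f; case: ifP => lt; rewrite /edge_set !inE /= (negbTE vS) ?andbF //=.
    by rewrite ep lt.
  rewrite esymm ep /= ltn_neqAle leqNgt lt andbT.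
  apply/negP => /eqP /val_inj E; by rewrite E (negbTE (eirr _)) in ep.
have finj : {in ~: S &, injective f}.
  move=> v v'; rewrite !inE => vS v'S feq.
  have /andP [_ h] := parP v vS; have /andP [_ h'] := parP v' v'S.
  have key : v = v' \/ (v = par v' /\ par v = v').
    move: feq; rewrite /f; case: ifP => _; case: ifP => _ [E1 E2]; by [left | right].
  case: key => [//|[E1 E2]].
  by move: h h'; rewrite E2 -E1; move=> h h'; have := ltn_trans h h'; rewrite ltnn.
have le : (#|~: S| <= #|edge_set e :\: B|)%N.
  rewrite -(card_in_imset finj); apply: subset_leq_card.
  apply/subsetP => _ /imsetP [v vS ->]; apply: fE; by rewrite inE in vS.
have E1 := cardsID B (edge_set e).
have E2 := cardsC S.
have -> : [set p in edge_set e | (p.1 \in S) && (p.2 \in S)] = edge_set e :&: B.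
  by apply/setP => p; rewrite !inE.
move: ne; rewrite /num_edges card_ord in E2 * => ne'; clear -le E1 E2 ne'; lia.
Qed.

Hypothesis n3 : (3 <= n)%N.
Hypothesis ne : num_edges e = n.
Hypothesis dle3 : forall v, (deg e v <= 3)%N.

Lemma edge_cls p : p \in edge_set e ->
  let d1 := deg e p.1 in let d2 := deg e p.2 in
  [/\ (bij d1 d2 1 2 + bij d1 d2 1 3 + bij d1 d2 2 2 + bij d1 d2 2 3
        + bij d1 d2 3 3 = 1)%N,
      (g6 d1 + g6 d2 = 9 * bij d1 d2 1 2 + 8 * bij d1 d2 1 3
        + 6 * bij d1 d2 2 2 + 5 * bij d1 d2 2 3 + 4 * bij d1 d2 3 3)%N,
      ((d1 == 3%N) + (d2 == 3%N) = bij d1 d2 1 3 + bij d1 d2 2 3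
        + 2 * bij d1 d2 3 3)%N &
      ((d1 == 1%N) + (d2 == 1%N) = bij d1 d2 1 2 + bij d1 d2 1 3)%N].
Proof.
rewrite /edge_set inE => /andP [ep _] /=.
apply: cls.
- by rewrite deg_pos ?dle3 //; lia.
- by rewrite deg_pos ?dle3 //; lia.
apply/negP => /andP [/eqP d1 /eqP d2].
exact: (no11 _ ep d1 d2).
Qed.

Lemma counts :
  [/\ n = (m_ij e 1 2 + m_ij e 1 3 + m_ij e 2 2 + m_ij e 2 3 + m_ij e 3 3)%N,
      (6 * n = 9 * m_ij e 1 2 + 8 * m_ij e 1 3 + 6 * m_ij e 2 2
         + 5 * m_ij e 2 3 + 4 * m_ij e 3 3)%N,
      (3 * \sum_v (deg e v == 3%N) = m_ij e 1 3 + m_ij e 2 3 + 2 * m_ij e 3 3)%N &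
      (\sum_v (deg e v == 1%N) = m_ij e 1 2 + m_ij e 1 3)%N].
Proof.
rewrite !m_sum; split.
- rewrite -{1}ne /num_edges -sum1_card.
  rewrite -!big_split /=; apply: eq_bigr => p pE.
  by case: (edge_cls pE).
- have -> : (6 * n = \sum_v deg e v * g6 (deg e v))%N.
    rewrite mulnC -[in LHS](card_ord n) -sum_nat_const.
    apply: eq_bigr => v _; have := deg_pos v; have := dle3 v.
    case: (deg e v) => [|[|[|[|]]]] //; lia.
  rewrite -handshake !big_distrr -!big_split /=; apply: eq_bigr => p pE.
  by case: (edge_cls pE).
- have -> : (3 * \sum_v (deg e v == 3%N) = \sum_v deg e v * (deg e v == 3%N))%N.
    rewrite big_distrr /=; apply: eq_bigr => v _.
    by case: eqP => [->|]; rewrite ?muln0.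
  rewrite -handshake !big_distrr -!big_split /=; apply: eq_bigr => p pE.
  by case: (edge_cls pE).
- have -> : (\sum_v (deg e v == 1%N) = \sum_v deg e v * (deg e v == 1%N))%N.
    by apply: eq_bigr => v _; case: (deg e v == 1%N) /eqP => [->|]; rewrite ?muln0 ?muln1.
  rewrite -handshake -!big_split /=; apply: eq_bigr => p pE.
  by case: (edge_cls pE).
Qed.
End G.

Section Cyc.
Variable n : nat.
Variable e : rel 'I_n.
Hypothesis esymm : forall x y, e x y = e y x.
Hypothesis eirr : forall x, ~~ e x x.
Hypothesis econn : forall x y, connect e x y.
Hypothesis n3 : (3 <= n)%N.
Hypothesis d2 : forall v, deg e v = 2%N.

Definition other (b a : 'I_n) : 'I_n := odflt a [pick w | e b w && (w != a)].

Lemma otherP b a : e b a -> e b (other b a) && (other b a != a).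
Proof.
move=> eba.
have : (1 < #|[set w | e b w]|)%N by rewrite -/(deg e b) d2.
move/card_gt1P => [x [y [xin yin xy]]]; rewrite !inE in xin yin.
rewrite /other; case: pickP => [w -> //| H]; exfalso.
case: (eqVneq x a) => xa.
  by subst x; have := H y; rewrite yin eq_sym xy.
by have := H x; rewrite xin xa.
Qed.

Definition v0 : 'I_n := Ordinal (leq_trans (isT : (1 <= 3)%N) n3).
Definition v1 : 'I_n := odflt v0 [pick w | e v0 w].

Lemma e01 : e v0 v1.
Proof.
rewrite /v1; case: pickP => [w -> //| H]; exfalso.
have : (0 < #|[set w | e v0 w]|)%N by rewrite -/(deg e v0) d2.
by move/card_gt0P => [x]; rewrite inE H.
Qed.

Fixpoint st (k : nat) : 'I_n * 'I_n :=
  if k is k'.+1 then ((st k').2, other (st k').2 (st k').1) else (v0, v1).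
Definition w k := (st k).1.

Lemma wS2 k : w k.+2 = other (w k.+1) (w k).
Proof. by []. Qed.

Lemma adj k : e (w k) (w k.+1).
Proof.
elim: k => [|k IH]; first exact: e01.
rewrite wS2; have := @otherP (w k.+1) (w k); rewrite esymm IH.
by move=> /(_ isT) /andP [].
Qed.

Lemma nback k : w k.+2 != w k.
Proof.
rewrite wS2; have := @otherP (w k.+1) (w k); rewrite esymm adj.
by move=> /(_ isT) /andP [].
Qed.

Lemma nbrs k x : e (w k.+1) x -> x = w k \/ x = w k.+2.
Proof.
apply: deg2_nb; first exact: d2.
- by rewrite esymm adj.
- exact: adj.
- by rewrite eq_sym nback.
Qed.

Definition P j := [forall a : 'I_j, forall b : 'I_j, (w a == w b) ==> (a == b)].

Lemma P_le j : P j -> (j <= n)%N.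
Proof.
move=> /forallP H.
have inj : injective (fun a : 'I_j => w a).
  move=> a b E; have := H a => /forallP /(_ b) /implyP.
  by rewrite E eqxx => /(_ isT) /eqP.
by have := leq_card _ inj; rewrite !card_ord.
Qed.

Lemma P1 : P 1.
Proof.
apply/forallP => a; apply/forallP => b; apply/implyP => _.
by rewrite (ord1 a) (ord1 b).
Qed.

Lemma cyc_iso : graph_iso e (@cycle_graph n).
Proof.
have [j Pj jmax] : exists2 j, P j & forall i, P i -> (i <= j)%N.
  by case: (ex_maxnP (ex_intro _ 1%N P1) P_le) => j Pj H; exists j.
have injP : forall a b, (a < j)%N -> (b < j)%N -> w a = w b -> a = b.
  move=> a b ha hb E; move/forallP: Pj => /(_ (Ordinal ha)) /forallP.
  move=> /(_ (Ordinal hb)) /implyP /=; rewrite E eqxx => /(_ isT) /eqP.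
  by move=> [].
have [a [b [ha [hb [ab Eab]]]]] : exists a b, [/\ (a < j.+1)%N, (b < j.+1)%N,
    a != b & w a = w b].
  have : ~~ P j.+1 by apply/negP => /jmax; rewrite ltnn.
  rewrite negb_forall => /existsP [a]; rewrite negb_forall => /existsP [b].
  rewrite negb_imply => /andP [/eqP E ab]; exists a, b; split => //.
have [i [hi Ei]] : exists i, (i < j)%N /\ w j = w i.
  case: (ltngtP a j) => [aj|ja|aj]; last 1 first.
  - exists b; rewrite -aj Eab; split => //.
    by move: hb ab; rewrite -aj; lia.
  - case: (ltngtP b j) => [bj|jb|bj]; last 1 first.
    + by exists a; split => //; rewrite -bj Eab.
    + by move: ab; rewrite (injP a b aj bj Eab) eqxx.
    + by move: hb; lia.
  - by move: ha; lia.
have j0 : (0 < j)%N by lia.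
have i0 : i = 0%N.
  case: i hi Ei => [//|i'] hi Ei; exfalso.
  case: j j0 hi Ei injP {Pj jmax ha hb} => [//|j'] _ hi Ei injP.
  have := adj j'; rewrite esymm Ei => /nbrs [] E.
  - have := injP _ _ (ltnSn j') (ltnW hi) E; lia.
  - case: (ltnP i'.+2 j'.+1) => hij.
    + have E2 := injP _ _ (ltnSn j') hij E.
      by move: Ei (nback i'.+1); rewrite -E2 => ->; rewrite eqxx.
    + have E2 : j' = i'.+1 by lia.
      by move: (adj i'.+1); rewrite -E -E2 (negbTE (eirr _)).
subst i.
have Ej1 : w j.+1 = w 1.
  case: j j0 Ei injP {hi jmax Pj ha hb} => [//|j'] _ Ei injP.
  case: j' Ei injP => [|j'] Ei injP.
    by move: (adj 0); rewrite -Ei (negbTE (eirr _)).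
  have := adj 0; rewrite -Ei => /nbrs [] E //.
  have E2 := injP _ _ (isT : (1 < j'.+2)%N) (ltnSn _) E.
  case: j' E2 Ei {E injP} => [_ Ei|//].
  by move: (nback 0); rewrite Ei eqxx.
have per2 : forall k, w (k + j) = w k /\ w (k.+1 + j) = w k.+1.
  elim => [|k [IH1 IH2]]; first by rewrite add0n Ei add1n Ej1.
  split => //.
  by rewrite !addSn wS2 -addSn IH2 IH1.
have per : forall k, w (k + j) = w k by move=> k; case: (per2 k).
have perq : forall q r, w (r + q * j) = w r.
  elim => [|q IH] r; first by rewrite mul0n addn0.
  by rewrite mulSn addnCA addnC per IH.
have pmod : forall k, w k = w (k %% j).
  by move=> k; rewrite {1}(divn_eq k j) addnC perq.
have jn : j = n.
  pose S := [set w (nat_of_ord k) | k : 'I_j].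
  have inS : forall m, w m \in S.
    move=> m; rewrite pmod; apply/imsetP.
    by exists (Ordinal (ltn_pmod m j0)).
  have cl : forall u x, u \in S -> e u x -> x \in S.
    move=> u x /imsetP [k _ ->]; rewrite -per.
    have -> : (k + j = (k + j).-1.+1)%N by lia.
    by move=> /nbrs [] ->.
  have := closed_card econn (inS 0%N) cl.
  rewrite card_imset ?card_ord //.
  move=> k1 k2 E; apply: val_inj; exact: injP (ltn_ord _) (ltn_ord _) E.
subst j.
pose g (k : 'I_n) : 'I_n := w k.
have ginj : injective g.
  move=> k1 k2 E; apply: val_inj; exact: injP (ltn_ord _) (ltn_ord _) E.
have n0 : (0 < n)%N by lia.
have key : forall k l : 'I_n, e (g k) (g l) = cycle_graph k l.
  move=> k l; rewrite /g /cycle_graph; apply/idP/idP.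
  - rewrite -per.
    have -> : (k + n = (k + n).-1.+1)%N by lia.
    move=> /nbrs [] E.
    + rewrite (pmod (k + n).-1) in E; have E2 := injP _ _ (ltn_ord _) (ltn_pmod _ n0) E.
      apply/orP; right; apply/eqP; have -> : val l = ((k + n).-1 %% n)%N := E2.
      rewrite -addn1 modnDml addn1.
      have -> : (((k + n).-1).+1 = k + n)%N by lia.
      by rewrite modnDr modn_small.
    + have E3 : ((k + n).-1.+2 = k.+1 + n)%N by lia.
      rewrite E3 per (pmod k.+1) in E.
      have E2 := injP _ _ (ltn_ord _) (ltn_pmod _ n0) E.
      by apply/orP; left; apply/eqP; exact: E2.
  - case/orP => /eqP E.
    + by rewrite E -pmod adj.
    + by rewrite esymm E -pmod adj.
exists (invF ginj); split.
  apply: injF_bij; exact: (can_inj (f_invF ginj)).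
move=> x y; by rewrite -key !f_invF.
Qed.
End Cyc.

From mathcomp Require Import ring lra.
Local Open Scope ring_scope.

Lemma gen (n : nat) (e : rel 'I_n) : (3 <= n)%N -> @in_G3 n n e ->
  [/\ (m_ij e 3 3 <= m_ij e 1 2 + m_ij e 1 3)%N,
      (m_ij e 1 2 + m_ij e 1 3 = \sum_v (deg e v == 1%N))%N,
      ((m_ij e 1 2 + m_ij e 1 3 = 0)%N -> forall v, deg e v = 2%N) &
      forall (R : realFieldType) (c12 c13 c22 c23 c33 : R),
        topo_index c12 c13 c22 c23 c33 e =
        c22 * n%:R + (c12 - 4%:R * c22 + 3%:R * c23) * (m_ij e 1 2)%:R
        + (c13 - 3%:R * c22 + 2%:R * c23) * (m_ij e 1 3)%:R
        + (c22 - 2%:R * c23 + c33) * (m_ij e 3 3)%:R].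
Proof.
move=> n3 [[esymm eirr] [conn [ne dle]]].
have [h1 h2 h3 h4] := counts esymm eirr conn n3 ne dle.
have c33le : (m_ij e 3 3 <= \sum_v (deg e v == 3%N))%N.
  have := inside_le esymm eirr conn [set v | deg e v == 3%N] ne.
  have -> : #|[set v | deg e v == 3%N]| = (\sum_v (deg e v == 3%N))%N.
    rewrite -sum1_card big_mkcond /=; apply: eq_bigr => v _.
    by rewrite inE; case: (deg e v == 3%N).
  apply: leq_trans; rewrite /m_ij; apply: eq_leq; apply: eq_card => p.
  by rewrite !inE orbb.
split.
- lia.
- by rewrite h4.
- move=> ab0 v.
  have s1 : (\sum_v (deg e v == 1%N) == 0)%N by rewrite h4 ab0.
  have s3 : (\sum_v (deg e v == 3%N) == 0)%N by apply/eqP; lia.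
  rewrite sum_nat_eq0 in s1; rewrite sum_nat_eq0 in s3.
  move/forallP: s1 => /(_ v); move/forallP: s3 => /(_ v) /=.
  have := dle v; have := deg_pos conn v (ltnW n3).
  by case: (deg e v) => [|[|[|[|]]]].
- move=> R c12 c13 c22 c23 c33.
  have e1 : (m_ij e 2 3 + 2 * m_ij e 3 3 = 3 * m_ij e 1 2 + 2 * m_ij e 1 3)%N by lia.
  have r1 := congr1 (fun x => x%:R : R) e1.
  have r2 := congr1 (fun x => x%:R : R) h1.
  rewrite /= !natrD ?natrM in r1 r2.
  rewrite /topo_index.
  have e23 : (m_ij e 2 3)%:R = 3%:R * (m_ij e 1 2)%:R + 2%:R * (m_ij e 1 3)%:R
     - 2%:R * (m_ij e 3 3)%:R :> R by lra.
  have e22 : (m_ij e 2 2)%:R = n%:R - (m_ij e 1 2)%:R - (m_ij e 1 3)%:R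
     - (m_ij e 2 3)%:R - (m_ij e 3 3)%:R :> R by lra.
  rewrite e22 e23; ring.
Qed.

Section CG.
Variable n : nat.
Hypothesis n3 : (3 <= n)%N.
Local Notation C := (@cycle_graph n).

Lemma succE (x : 'I_n) : (x.+1 %% n = if x.+1 == n then 0 else x.+1)%N.
Proof.
case: eqP => [->|ne]; first by rewrite modnn.
by rewrite modn_small //; have := ltn_ord x; lia.
Qed.

Lemma C_sym x y : C x y = C y x.
Proof. by rewrite /cycle_graph orbC. Qed.

Lemma C_irr x : ~~ C x x.
Proof.
rewrite /cycle_graph orbb succE; have := ltn_ord x.
by case: (x.+1 =P n) => E lt; apply/eqP; rewrite /val /=; lia.
Qed.

Lemma C_conn x y : connect C x y.
Proof.
have n0 : (0 < n)%N by lia.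
pose z : 'I_n := Ordinal n0.
have H : forall k (hk : (k < n)%N), connect C z (Ordinal hk).
  elim => [|k IH] hk.
    by have -> : Ordinal hk = z by apply: val_inj.
  apply: connect_trans (IH (ltnW hk)) (connect1 _).
  by rewrite /cycle_graph /= modn_small // eqxx.
have cs := sym_connect_sym C_sym.
apply: connect_trans (_ : connect C x z) _.
  rewrite cs; have := H x (ltn_ord x).
  by have -> : Ordinal (ltn_ord x) = x by apply: val_inj.
have := H y (ltn_ord y).
by have -> : Ordinal (ltn_ord y) = y by apply: val_inj.
Qed.

Lemma C_deg x : deg C x = 2%N.
Proof.
have n0 : (0 < n)%N by lia.
pose a : 'I_n := Ordinal (ltn_pmod x.+1 n0).
pose b : 'I_n := Ordinal (ltn_pmod (x + n).-1 n0).
have pE : (((x + n).-1) %% n = if nat_of_ord x == 0%N then n.-1 else (nat_of_ord x).-1)%N.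
  case: eqP => [->|nz]; first by rewrite add0n modn_small //; lia.
  have -> : ((x + n).-1 = (nat_of_ord x).-1 + n)%N by lia.
  by rewrite modnDr modn_small //; have := ltn_ord x; lia.
rewrite /deg; have -> : [set y | C x y] = [set a; b].
  apply/setP => y; rewrite !inE /cycle_graph.
  rewrite -!(inj_eq val_inj) /val /= succE pE succE.
  have := ltn_ord x; have := ltn_ord y.
  case: (x.+1 =P n); case: (y.+1 =P n); case: (nat_of_ord x =P 0%N);
    move=> *; apply/idP/idP; (move=> /orP [] /eqP ? ; apply/orP) || idtac;
    try (by left; apply/eqP; lia); try (by right; apply/eqP; lia);
    lia.
rewrite cards2.
have : a != b.
  rewrite -(inj_eq val_inj) /val /= succE pE; have := ltn_ord x.
  case: (x.+1 =P n); case: (nat_of_ord x =P 0%N) => *; apply/eqP; lia.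
by case: (a != b).
Qed.

Lemma C_G3 : @in_G3 n n C.
Proof.
split; first by split; [exact: C_sym | exact: C_irr].
split; first exact: C_conn.
split; last by move=> v; rewrite C_deg.
have := handshake C_sym C_irr (fun _ => 1%N).
rewrite sum_nat_const.
under eq_bigr => v _ do rewrite C_deg.
rewrite sum_nat_const card_ord /num_edges; lia.
Qed.
End CG.

Lemma keyR (R : realFieldType) (x y z A B C : R) : 0 < x -> 0 < y -> - z < x -> - z < y ->
  0 <= A -> 0 <= B -> 0 <= C -> C <= A + B ->
  0 <= x * A + y * B + z * C /\ (x * A + y * B + z * C = 0 -> A + B = 0).
Proof.
move=> x0 y0 xz yz A0 B0 C0 CAB.
have [x' [y' [x'0 [y'0 H1]]]] : exists x' y', 0 < x' /\ 0 < y' /\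
   x' * A + y' * B <= x * A + y * B + z * C.
  case: (leP 0 z) => hz.
    exists x, y; do 2 split => //.
    have : 0 <= z * C by apply: mulr_ge0.
    lra.
  exists (x + z), (y + z); split; first lra; split; first lra.
  have : z * (A + B) <= z * C by apply: ler_wnM2l => //; lra.
  rewrite mulrDr mulrDl mulrDl; lra.
have xa : 0 <= x' * A by apply: mulr_ge0 => //; lra.
have yb : 0 <= y' * B by apply: mulr_ge0 => //; lra.
split; first lra.
move=> E.
have : x' * A = 0 by lra.
have : y' * B = 0 by lra.
move/eqP; rewrite mulf_eq0 (gt_eqF y'0) /= => /eqP ->.
move/eqP; rewrite mulf_eq0 (gt_eqF x'0) /= => /eqP ->.
by rewrite addr0.
Qed.

Theorem theorem2 (R : realFieldType) (c12 c13 c22 c23 c33 : R) (n : nat) :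
  (3 <= n)%N ->
  let c12' := c12 - 4%:R * c22 + 3%:R * c23 in
  let c13' := c13 - 3%:R * c22 + 2%:R * c23 in
  let c33' := c22 - 2%:R * c23 + c33 in
  Num.max 0 (- c33') < Num.min c12' c13' ->
  @in_G3 n n ((@cycle_graph n)) /\
  (forall e : rel 'I_n, @in_G3 n n e ->
     topo_index c12 c13 c22 c23 c33 ((@cycle_graph n))
       <= topo_index c12 c13 c22 c23 c33 e /\
     (topo_index c12 c13 c22 c23 c33 e
        = topo_index c12 c13 c22 c23 c33 ((@cycle_graph n)) ->
      graph_iso e ((@cycle_graph n)))).
Proof.
move=> n3 c12' c13' c33'.
rewrite lt_min !gt_max => /andP [/andP [p1 q1] /andP [p2 q2]].
split; first exact: C_G3.
move=> e He.
have [c1 s1 d1 f1] := gen n3 He.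
have [c0 s0 d0 f0] := gen n3 (C_G3 n3).
have z0 : (\sum_v (deg (@cycle_graph n) v == 1%N) = 0)%N.
  by apply: big1 => v _; rewrite C_deg.
have z12 : m_ij (@cycle_graph n) 1 2 = 0%N by lia.
have z13 : m_ij (@cycle_graph n) 1 3 = 0%N by lia.
have z33 : m_ij (@cycle_graph n) 3 3 = 0%N by lia.
rewrite f0 f1 z12 z13 z33 !mulr0 !addr0 -/c12' -/c13' -/c33'.
have := @keyR R c12' c13' c33' (m_ij e 1 2)%:R (m_ij e 1 3)%:R (m_ij e 3 3)%:R
  p1 p2 q1 q2 (ler0n _ _) (ler0n _ _) (ler0n _ _).
rewrite -natrD ler_nat => /(_ c1) [K1 K2].
split.
  by rewrite -!addrA lerDl addrA.
move=> E.
have : (m_ij e 1 2 + m_ij e 1 3)%:R = 0 :> R.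
  apply: K2; lra.
move/eqP; rewrite pnatr_eq0 => /eqP /d1 deg2.
case: He => [[es ei] [ec _]].
exact: cyc_iso es ei ec n3 deg2.
Qed.
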